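(* Let $V$ be a set of $N\geq3$ truth values with a partial order $\leq$ having $0$ as least and $1$ as greatest element, let $\models_{\leq}$ be the associated order-theoretic truth-relation, and assume the semantics is at least atomic expressive. Then $\models_{\leq}$ admits no G-negation and no G-conditional. Moreover, it admits a G-conjunction and a G-disjunction if and only if it is total, i.e. any two truth values other than $0,1$ are comparable under $\leq$.
   Context: $\gamma\models_{\leq}\delta$ iff ($\exists x\in\gamma,\exists y\in\delta: x\leq y$) or $0\in\gamma$ or $1\in\delta$. Semantics: valuations mapping atoms to $V$, connectives interpreted by fixed truth functions, extended compositionally, every assignment of values to finitely many distinct atoms realized. Atomic expressive: for every $\gamma\subseteq V$ some set of formulas $\Gamma$ and valuation $v$ have $v(\Gamma)=\gamma$. $\Gamma\vdash\Delta$ iff $v(\Gamma)\models_{\leq}v(\Delta)$ for all $v$; $\Gamma,A=\Gamma\cup\{A\}$. Admitting a G-connective means some truth function makes a connective satisfy, for all $\Gamma,\Delta,A,B$: G-conjunction: $\Gamma,A\wedge B\vdash\Delta$ iff $\Gamma,A,B\vdash\Delta$; $\Gamma\vdash A\wedge B,\Delta$ iff ($\Gamma\vdash A,\Delta$ and $\Gamma\vdash B,\Delta$). G-disjunction: $\Gamma\vdash A\vee B,\Delta$ iff $\Gamma\vdash A,B,\Delta$; $\Gamma,A\vee B\vdash\Delta$ iff ($\Gamma,A\vdash\Delta$ and $\Gamma,B\vdash\Delta$). G-negation: $\Gamma,\neg A\vdash\Delta$ iff $\Gamma\vdash A,\Delta$; $\Gamma\vdash\neg A,\Delta$ iff $\Gamma,A\vdash\Delta$.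 G-conditional: $\Gamma\vdash A\to B,\Delta$ iff $\Gamma,A\vdash B,\Delta$; $\Gamma,A\to B\vdash\Delta$ iff ($\Gamma\vdash A,\Delta$ and $\Gamma,B\vdash\Delta$). *)

(* Defs.v *)
From mathcomp Require Import all_boot.
Set Implicit Arguments.
Unset Strict Implicit.
Unset Printing Implicit Defensive.

Definition order_with_bounds (V : Type) (le : V -> V -> Prop) (v0 v1 : V) : Prop :=
  (forall x, le x x) /\
  (forall x y, le x y -> le y x -> x = y) /\
  (forall x y z, le x y -> le y z -> le x z) /\
  (forall x, le v0 x) /\
  (forall x, le x v1).

Definition models_le (V : Type) (le : V -> V -> Prop) (v0 v1 : V)
  (gamma delta : V -> Prop) : Prop :=
  (exists x y, gamma x /\ delta y /\ le x y) \/ gamma v0 \/ delta v1.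

Definition total_le (V : Type) (le : V -> V -> Prop) (v0 v1 : V) : Prop :=
  forall x y, x <> v0 -> x <> v1 -> y <> v0 -> y <> v1 -> le x y \/ le y x.

Inductive form (C : Type) (ar : C -> nat) : Type :=
| Atom : nat -> form ar
| Op : forall c : C, ('I_(ar c) -> form ar) -> form ar.

Fixpoint eval (V C : Type) (ar : C -> nat)
  (I : forall c : C, ('I_(ar c) -> V) -> V) (v : nat -> V) (A : form ar) : V :=
  match A with
  | Atom n => v n
  | Op c ts => I c (fun i => eval I v (ts i))
  end.

(* A semantics: connectives with fixed truth functions, and a class of  *)
(* admissible valuations of the atoms.                                  *)
Record semantics (V : Type) := Semantics {
  conn : Type;
  arity : conn -> nat;
  interp : forall c : conn, ('I_(arity c) -> V) -> V;
  vals : (nat -> V) -> Prop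
}.

Definition sform (V : Type) (S : semantics V) := form (@arity V S).

Definition seval (V : Type) (S : semantics V) (v : nat -> V) (A : sform S) : V :=
  eval (@interp V S) v A.

Definition realizes_finite (V : Type) (S : semantics V) : Prop :=
  forall (f : nat -> V) (s : seq nat),
    exists v, vals S v /\ forall n, n \in s -> v n = f n.

Definition vimg (V : Type) (S : semantics V) (v : nat -> V) (G : sform S -> Prop)
  : V -> Prop := fun x => exists A, G A /\ seval v A = x.

Definition atomic_expressive (V : Type) (S : semantics V) : Prop :=
  forall gamma : V -> Prop,
    exists (G : sform S -> Prop) (v : nat -> V),
      vals S v /\ forall x, vimg v G x <-> gamma x.

Definition sequent (V : Type) (le : V -> V -> Prop) (v0 v1 : V) (S : semantics V)
  (G D : sform S -> Prop) : Prop :=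
  forall v, vals S v -> models_le le v0 v1 (vimg v G) (vimg v D).

Definition addf (T : Type) (G : T -> Prop) (A : T) : T -> Prop :=
  fun B => G B \/ B = A.

(* Extending a semantics by one new connective of arity k interpreted   *)
(* by the truth function f.  The new connective is [None].              *)
Definition ext_arity {V : Type} (S : semantics V) (k : nat) (o : option (conn S)) : nat :=
  match o with Some c => arity c | None => k end.

Definition ext_interp {V : Type} (S : semantics V) (k : nat) (f : ('I_k -> V) -> V)
  (o : option (conn S)) : ('I_(@ext_arity V S k o) -> V) -> V :=
  match o as o0 return ('I_(@ext_arity V S k o0) -> V) -> V with
  | Some c => @interp V S c
  | None => f
  end.

Definition extend {V : Type} (S : semantics V) (k : nat) (f : ('I_k -> V) -> V)
  : semantics V :=
  @Semantics V (option (conn S)) (@ext_arity V S k) (@ext_interp V S k f) (vals S).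

Definition new1 {V : Type} {S : semantics V} (f : ('I_1 -> V) -> V)
  (A : sform (extend S f)) : sform (extend S f) :=
  @Op _ (@arity V (extend S f)) (None : conn (extend S f)) (fun _ => A).

Definition new2 {V : Type} {S : semantics V} (f : ('I_2 -> V) -> V)
  (A B : sform (extend S f)) : sform (extend S f) :=
  @Op _ (@arity V (extend S f)) (None : conn (extend S f))
    (fun i : 'I_2 => if val i == 0 then A else B).

Definition admits_Gneg (V : Type) (le : V -> V -> Prop) (v0 v1 : V) (S : semantics V)
  : Prop :=
  exists f : ('I_1 -> V) -> V,
    forall (G D : sform (extend S f) -> Prop) (A : sform (extend S f)),
      (sequent le v0 v1 (addf G (new1 A)) D <-> sequent le v0 v1 G (addf D A)) /\
      (sequent le v0 v1 G (addf D (new1 A)) <-> sequent le v0 v1 (addf G A) D).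

Definition admits_Gconj (V : Type) (le : V -> V -> Prop) (v0 v1 : V) (S : semantics V)
  : Prop :=
  exists f : ('I_2 -> V) -> V,
    forall (G D : sform (extend S f) -> Prop) (A B : sform (extend S f)),
      (sequent le v0 v1 (addf G (new2 A B)) D <->
         sequent le v0 v1 (addf (addf G A) B) D) /\
      (sequent le v0 v1 G (addf D (new2 A B)) <->
         (sequent le v0 v1 G (addf D A) /\ sequent le v0 v1 G (addf D B))).

Definition admits_Gdisj (V : Type) (le : V -> V -> Prop) (v0 v1 : V) (S : semantics V)
  : Prop :=
  exists f : ('I_2 -> V) -> V,
    forall (G D : sform (extend S f) -> Prop) (A B : sform (extend S f)),
      (sequent le v0 v1 G (addf D (new2 A B)) <->
         sequent le v0 v1 G (addf (addf D A) B)) /\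
      (sequent le v0 v1 (addf G (new2 A B)) D <->
         (sequent le v0 v1 (addf G A) D /\ sequent le v0 v1 (addf G B) D)).

Definition admits_Gcond (V : Type) (le : V -> V -> Prop) (v0 v1 : V) (S : semantics V)
  : Prop :=
  exists f : ('I_2 -> V) -> V,
    forall (G D : sform (extend S f) -> Prop) (A B : sform (extend S f)),
      (sequent le v0 v1 G (addf D (new2 A B)) <->
         sequent le v0 v1 (addf G A) (addf D B)) /\
      (sequent le v0 v1 (addf G (new2 A B)) D <->
         (sequent le v0 v1 G (addf D A) /\ sequent le v0 v1 (addf G B) D)).

(* Main.v *)
Require Import Defs.
From Stdlib Require Import Classical ClassicalEpsilon FunctionalExtensionality PropExtensionality.
From mathcomp Require Import all_boot.
Set Implicit Arguments. Unset Strict Implicit. Unset Printing Implicit Defensive.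

Lemma addR (V : Type) (le : V -> V -> Prop) v0 v1 g d c :
  models_le le v0 v1 g (addf d c) <-> models_le le v0 v1 g d \/ (exists x, g x /\ le x c) \/ v1 = c.
Proof.
rewrite /models_le /addf; split.
- case=> [[x [y [gx [[dy|->] l]]]]|[g0|[d1|e1]]]; [left; left; exists x, y| right; left; exists x | left; right; left| left; right; right| right; right]; by auto.
- case=> [[[x [y [gx [dy l]]]]|[g0|d1]]|[[x [gx l]]|e1]].
  + left; exists x, y; auto.
  + by right; left.
  + by right; right; left.
  + left; exists x, c; auto.
  + by right; right; right.
Qed.

Lemma addL (V : Type) (le : V -> V -> Prop) v0 v1 g d c :
  models_le le v0 v1 (addf g c) d <-> models_le le v0 v1 g d \/ (exists y, d y /\ le c y) \/ v0 = c.
Proof.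
rewrite /models_le /addf; split.
- case=> [[x [y [[gx|->] [dy l]]]]|[[g0|e0]|d1]]; [left; left; exists x, y| right; left; exists y | left; right; left| right; right| left; right; right]; by auto.
- case=> [[[x [y [gx [dy l]]]]|[g0|d1]]|[[y [dy l]]|e0]].
  + left; exists x, y; auto.
  + by right; left; left.
  + by right; right.
  + left; exists c, y; auto.
  + by right; left; right.
Qed.

Lemma meetL (V : Type) (le : V -> V -> Prop) v0 v1 g d m a b :
  order_with_bounds le v0 v1 -> (m = a \/ m = b) -> le m a -> le m b ->
  (models_le le v0 v1 (addf g m) d <-> models_le le v0 v1 (addf (addf g a) b) d).
Proof.
move=> [r [an [t [b0 b1]]]] Hm ma mb; rewrite !addL.
have E: forall c, le m c -> ((exists y, d y /\ le c y) \/ v0 = c) -> ((exists y, d y /\ le m y) \/ v0 = m).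
  move=> c mc [[y [dy l]]|e]; [left; exists y; split=>//; exact: t mc l|right; apply: an (b0 m) _; by rewrite e].
split.
- case=> [P|R]; [by left; left|]. case: Hm => Hm; subst m; [left; right|right]; done.
- case=> [[P|Ra]|Rb]; [by left| right; exact: E Ra| right; exact: E Rb].
Qed.

Lemma meetR (V : Type) (le : V -> V -> Prop) v0 v1 g d m a b :
  order_with_bounds le v0 v1 -> (m = a \/ m = b) -> le m a -> le m b ->
  (models_le le v0 v1 g (addf d m) <-> models_le le v0 v1 g (addf d a) /\ models_le le v0 v1 g (addf d b)).
Proof.
move=> [r [an [t [b0 b1]]]] Hm ma mb; rewrite !addR.
have E: forall c, le m c -> ((exists x, g x /\ le x m) \/ v1 = m) -> ((exists x, g x /\ le x c) \/ v1 = c).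
  move=> c mc [[x [gx l]]|e]; [left; exists x; split=>//; exact: t l mc|right; apply: an _ (b1 c); by rewrite e].
split.
- case=> [P|R]; [by split; left|]. split; right; [exact: E ma R| exact: E mb R].
- case=> [[P|Ra] [P'|Rb]]; try by left. case: Hm => Hm; subst m; by right.
Qed.

Lemma flip_ord (V : Type) (le : V -> V -> Prop) v0 v1 :
  order_with_bounds le v0 v1 -> order_with_bounds (fun x y => le y x) v1 v0.
Proof.
move=> [r [an [t [b0 b1]]]]; split; [|split; [|split; [|split]]] => //.
- move=> x y h1 h2; exact: an h2 h1.
- move=> x y z h1 h2; exact: t h2 h1.
Qed.

Lemma models_flip (V : Type) (le : V -> V -> Prop) v0 v1 g d :
  models_le le v0 v1 g d <-> models_le (fun x y => le y x) v1 v0 d g.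
Proof.
rewrite /models_le; split.
- case=> [[x [y [gx [dy l]]]]|[g0|d1]]; [left; exists y, x| right; right| right; left]; auto.
- case=> [[x [y [gx [dy l]]]]|[g0|d1]]; [left; exists y, x| right; right| right; left]; auto.
Qed.

Lemma joinR (V : Type) (le : V -> V -> Prop) v0 v1 g d m a b :
  order_with_bounds le v0 v1 -> (m = a \/ m = b) -> le a m -> le b m ->
  (models_le le v0 v1 g (addf d m) <-> models_le le v0 v1 g (addf (addf d a) b)).
Proof.
move=> H Hm am bm; rewrite !(models_flip le); exact: meetL (flip_ord H) Hm am bm.
Qed.

Lemma joinL (V : Type) (le : V -> V -> Prop) v0 v1 g d m a b :
  order_with_bounds le v0 v1 -> (m = a \/ m = b) -> le a m -> le b m ->
  (models_le le v0 v1 (addf g m) d <-> models_le le v0 v1 (addf g a) d /\ models_le le v0 v1 (addf g b) d).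
Proof.
move=> H Hm am bm; rewrite !(models_flip le); exact: meetR (flip_ord H) Hm am bm.
Qed.

Lemma vimg_addf (V : Type) (S : semantics V) (v : nat -> V) G A :
  vimg v (addf G A) = addf (vimg v G) (@seval V S v A).
Proof.
apply: functional_extensionality => x; apply: propositional_extensionality.
rewrite /vimg /addf; split.
- case=> B [[GB|E] <-]; [left; exists B|right; rewrite E]; done.
- case=> [[B [GB <-]]| ->]; [exists B; split; [left|]|exists A; split; [right|]]; done.
Qed.

Lemma vimg_empty (V : Type) (S : semantics V) (v : nat -> V) :
  vimg v (fun _ : sform S => False) = (fun _ => False).
Proof.
apply: functional_extensionality => x; apply: propositional_extensionality.
by split=> // [[B []]].
Qed.

Lemma mid (V : finType) (v0 v1 : V) : 3 <= #|V| -> exists m, m <> v0 /\ m <> v1.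
Proof.
move=> HN.
case: (pickP (fun m => (m != v0) && (m != v1))) => [m /andP[/eqP a /eqP b]|H]; first by exists m.
exfalso; have: #|V| <= 2.
  apply: (leq_trans _ (card_size [:: v0; v1])); apply: subset_leq_card; apply/subsetP => z _.
  move: (H z); rewrite !inE; by case: eqP; case: eqP.
by move=> /(leq_trans HN).
Qed.

Lemma val2 (V : Type) (S : semantics V) (Hfin : realizes_finite S) (x y : V) :
  exists v, vals S v /\ v 0 = x /\ v 1 = y.
Proof.
case: (Hfin (fun n => if n == 0 then x else y) [:: 0; 1]) => v [Hv E].
exists v; split=> //; split; [exact: (E 0 _)|exact: (E 1 _)].
Qed.

Lemma seq_triv (V : Type) (le : V -> V -> Prop) v0 v1 (S : semantics V) G D (A : sform S) :
  (forall x, le x x) -> G A -> D A -> sequent le v0 v1 G D.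
Proof.
move=> r GA DA v _; left; exists (seval v A), (seval v A); split; [exists A|split; [exists A|]]; done.
Qed.

Lemma no_neg (V : finType) (le : V -> V -> Prop) (v0 v1 : V)
  (Hord : order_with_bounds le v0 v1) (HN : 3 <= #|V|)
  (S : semantics V) (Hfin : realizes_finite S) : ~ admits_Gneg le v0 v1 S.
Proof.
move=> [f Hf].
have [m [m0 m1]] := mid v0 v1 HN.
have [r [an [t [b0 b1]]]] := Hord.
pose e := fun _ : sform (extend S f) => False.
pose p := @Atom _ (@arity V (extend S f)) 0.
have H1 : sequent le v0 v1 (addf (addf e p) (new1 p)) e.
  apply (proj2 (proj1 (Hf (addf e p) e p))). apply: (@seq_triv _ _ _ _ _ _ _ p r); by right.
have H2 : sequent le v0 v1 e (addf (addf e p) (new1 p)).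
  apply (proj2 (proj2 (Hf e (addf e p) p))). apply: (@seq_triv _ _ _ _ _ _ _ p r); by right.
have [v [Hv [E0 _]]] := val2 Hfin m m.
move: (H1 v Hv) (H2 v Hv); rewrite !vimg_addf !vimg_empty /models_le /addf.
have ->: seval v p = m by [].
set d := seval v (new1 p).
case=> [[x [y [_ [[] _]]]]|[[[[]|E1]|E2]|[]]]; first by case: m0.
case=> [[x [y [[] _]]]|[[]|[[[]|E3]|E4]]]; first by case: m1.
apply: m0; apply: an (b0 m); by rewrite E2 -E4.
Qed.

Lemma no_cond (V : finType) (le : V -> V -> Prop) (v0 v1 : V)
  (Hord : order_with_bounds le v0 v1) (HN : 3 <= #|V|)
  (S : semantics V) (Hfin : realizes_finite S) : ~ admits_Gcond le v0 v1 S.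
Proof.
move=> [f Hf].
have [m [m0 m1]] := mid v0 v1 HN.
have [r [an [t [b0 b1]]]] := Hord.
pose e := fun _ : sform (extend S f) => False.
pose p := @Atom _ (@arity V (extend S f)) 0.
pose q := @Atom _ (@arity V (extend S f)) 1.
have H1 : sequent le v0 v1 (addf (addf e (new2 p q)) p) (addf e q).
  apply (proj1 (proj1 (Hf (addf e (new2 p q)) e p q))).
  apply: (@seq_triv _ _ _ _ _ _ _ (new2 p q) r); by right.
have H2 : sequent le v0 v1 e (addf (addf e p) (new2 p q)).
  apply (proj2 (proj1 (Hf e (addf e p) p q))).
  apply: (@seq_triv _ _ _ _ _ _ _ p r); [by right|by left; right].
have [v [Hv [E0 E1]]] := val2 Hfin m v0.
move: (H1 v Hv) (H2 v Hv); rewrite !vimg_addf !vimg_empty /models_le /addf.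
have ->: seval v p = m by [].
have ->: seval v q = v0 by [].
set d := seval v (new2 p q).
move=> M1 M2.
have v01 : v0 <> v1 by move=> E; apply: m0; apply: an (b0 m); rewrite E.
have Hd : d = v0.
  case: M1 => [[x [y [[[[]|->]|->] [[[]|->] l]]]]|[[[[]|E2]|E3]|[[]|E4]]].
  - by apply: an l (b0 d).
  - by case: m0; apply: an l (b0 m).
  - by [].
  - by case: m0.
  - by case: v01.
case: M2 => [[x [y [[] _]]]|[[]|[[[]|E3]|E4]]]; first by case: m1.
by apply: v01; rewrite -Hd E4.
Qed.

Lemma disj_total (V : finType) (le : V -> V -> Prop) (v0 v1 : V)
  (Hord : order_with_bounds le v0 v1)
  (S : semantics V) (Hfin : realizes_finite S) : admits_Gdisj le v0 v1 S -> total_le le v0 v1.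
Proof.
move=> [f Hf] a b a0 a1 b0' b1'.
have [r [an [t [b0 b1]]]] := Hord.
pose e := fun _ : sform (extend S f) => False.
pose p := @Atom _ (@arity V (extend S f)) 0.
pose q := @Atom _ (@arity V (extend S f)) 1.
have H2 := proj1 (proj1 (proj2 (Hf e (addf e (new2 p q)) p q))
   (@seq_triv _ _ _ _ _ _ _ (new2 p q) r (or_intror erefl) (or_intror erefl))).
have H3 := proj2 (proj1 (proj2 (Hf e (addf e (new2 p q)) p q))
   (@seq_triv _ _ _ _ _ _ _ (new2 p q) r (or_intror erefl) (or_intror erefl))).
have H1 := proj1 (proj1 (Hf (addf e (new2 p q)) e p q))
   (@seq_triv _ _ _ _ _ _ _ (new2 p q) r (or_intror erefl) (or_intror erefl)).
have [v [Hv [E0 E1]]] := val2 Hfin a b.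
move: (H1 v Hv) (H2 v Hv) (H3 v Hv); rewrite !vimg_addf !vimg_empty /models_le /addf.
have ->: seval v p = a by [].
have ->: seval v q = b by [].
set d := seval v (new2 p q).
move=> M1 M2 M3.
have ad : le a d.
  case: M2 => [[x [y [[[]|->] [[[]|->] l]]]]|[[[]|E2]|[[]|E3]]] //.
  - by case: a0.
  - by rewrite -E3.
have bd : le b d.
  case: M3 => [[x [y [[[]|->] [[[]|->] l]]]]|[[[]|E2]|[[]|E3]]] //.
  - by case: b0'.
  - by rewrite -E3.
case: M1 => [[x [y [[[]|->] [[[[]|->]|->] l]]]]|[[[]|E2]|[[[]|E3]|E4]]].
- by right; apply: t bd l.
- by left; apply: t ad l.
- by case: a0; apply: an (b0 a); rewrite E2.
- by case: a1.
- by case: b1'.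
Qed.

Definition mn (V : Type) (le : V -> V -> Prop) (a b : V) : V :=
  if excluded_middle_informative (le a b) then a else b.
Definition mx (V : Type) (le : V -> V -> Prop) (a b : V) : V :=
  if excluded_middle_informative (le a b) then b else a.

Lemma full_total (V : finType) (le : V -> V -> Prop) (v0 v1 : V) :
  order_with_bounds le v0 v1 -> total_le le v0 v1 -> forall a b, le a b \/ le b a.
Proof.
move=> [r [an [t [b0 b1]]]] T a b.
case: (eqVneq a v0) => [->|a0]; first by left.
case: (eqVneq a v1) => [->|a1]; first by right.
case: (eqVneq b v0) => [->|b0']; first by right.
case: (eqVneq b v1) => [->|b1']; first by left.
by apply: T; apply/eqP.
Qed.

Lemma mn_props (V : Type) (le : V -> V -> Prop) a b :
  (forall x, le x x) -> (le a b \/ le b a) ->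
  (mn le a b = a \/ mn le a b = b) /\ le (mn le a b) a /\ le (mn le a b) b.
Proof.
move=> r T; rewrite /mn; case: excluded_middle_informative => h.
- by split; [left|split].
- by split; [right|split; [case: T|]].
Qed.

Lemma mx_props (V : Type) (le : V -> V -> Prop) a b :
  (forall x, le x x) -> (le a b \/ le b a) ->
  (mx le a b = a \/ mx le a b = b) /\ le a (mx le a b) /\ le b (mx le a b).
Proof.
move=> r T; rewrite /mx; case: excluded_middle_informative => h.
- by split; [right|split].
- by split; [left|split; [|case: T]].
Qed.

Lemma total_conj (V : finType) (le : V -> V -> Prop) (v0 v1 : V)
  (Hord : order_with_bounds le v0 v1) (S : semantics V) :
  total_le le v0 v1 -> admits_Gconj le v0 v1 S.
Proof.
move=> T; have FT := full_total Hord T.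
have r := proj1 Hord.
exists (fun g : 'I_2 -> V => mn le (g ord0) (g ord_max)) => G D A B.
split.
- rewrite /sequent; split => H v Hv; move: (H v Hv); rewrite !vimg_addf;
  have [P1 [P2 P3]] := mn_props (a:=seval v A) (b:=seval v B) r (FT _ _);
  have := meetL (vimg v G) (vimg v D) Hord P1 P2 P3; by case.
- rewrite /sequent; split.
  + move=> H; split=> v Hv; move: (H v Hv); rewrite !vimg_addf;
    have [P1 [P2 P3]] := mn_props (a:=seval v A) (b:=seval v B) r (FT _ _);
    have := meetR (vimg v G) (vimg v D) Hord P1 P2 P3; by case=> + _ => /[apply] [[]].
  + move=> [H1 H2] v Hv; move: (H1 v Hv) (H2 v Hv); rewrite !vimg_addf;
    have [P1 [P2 P3]] := mn_props (a:=seval v A) (b:=seval v B) r (FT _ _);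
    have := meetR (vimg v G) (vimg v D) Hord P1 P2 P3; case=> _ X Y Z; exact: X.
Qed.

Lemma total_disj (V : finType) (le : V -> V -> Prop) (v0 v1 : V)
  (Hord : order_with_bounds le v0 v1) (S : semantics V) :
  total_le le v0 v1 -> admits_Gdisj le v0 v1 S.
Proof.
move=> T; have FT := full_total Hord T.
have r := proj1 Hord.
exists (fun g : 'I_2 -> V => mx le (g ord0) (g ord_max)) => G D A B.
split.
- rewrite /sequent; split => H v Hv; move: (H v Hv); rewrite !vimg_addf;
  have [P1 [P2 P3]] := mx_props (a:=seval v A) (b:=seval v B) r (FT _ _);
  have := joinR (vimg v G) (vimg v D) Hord P1 P2 P3; by case.
- rewrite /sequent; split.
  + move=> H; split=> v Hv; move: (H v Hv); rewrite !vimg_addf;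
    have [P1 [P2 P3]] := mx_props (a:=seval v A) (b:=seval v B) r (FT _ _);
    have := joinL (vimg v G) (vimg v D) Hord P1 P2 P3; by case=> + _ => /[apply] [[]].
  + move=> [H1 H2] v Hv; move: (H1 v Hv) (H2 v Hv); rewrite !vimg_addf;
    have [P1 [P2 P3]] := mx_props (a:=seval v A) (b:=seval v B) r (FT _ _);
    have := joinL (vimg v G) (vimg v D) Hord P1 P2 P3; case=> _ X Y Z; exact: X.
Qed.

Theorem theorem6p7 (V : finType) (le : V -> V -> Prop) (v0 v1 : V)
  (Hord : order_with_bounds le v0 v1) (HN : 3 <= #|V|)
  (S : semantics V) (Hfin : realizes_finite S) (Hexp : atomic_expressive S) :
  ~ admits_Gneg le v0 v1 S /\ ~ admits_Gcond le v0 v1 S /\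
  (admits_Gconj le v0 v1 S /\ admits_Gdisj le v0 v1 S <-> total_le le v0 v1).
Proof.
split; first exact: no_neg Hord HN S Hfin.
split; first exact: no_cond Hord HN S Hfin.
split.
- by case=> _; apply: disj_total Hord S Hfin.
- by move=> T; split; [apply: total_conj Hord S T|apply: total_disj Hord S T].
Qed.
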